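(* Let $\Phi$ be a real, additive gain graph on $\{1,\dots,n\}$ with edge set $E$, and let $\mathbf{Q}=(Q_1,\dots,Q_n)\in(\mathbb{E}^d)^n$ with $Q_i\neq Q_j$ whenever $i,j$ are adjacent. Suppose the intersection $s$ of all hyperplanes of $\mathcal{H}(\Phi;\mathbf{Q})$ is nonempty. Then (a) $\Phi$ is balanced (i.e. $E$ is balanced), and (b) $s$ is the intersection of some subset of $\mathcal{H}(\Phi;\mathbf{Q})$ consisting of $d-\dim s$ hyperplanes, and any subset of $d-\dim s$ hyperplanes whose intersection is $s$ corresponds to an edge set of $\Phi$ that is a forest (contains no circle).
   Context: $\mathbb{E}^d$ is Euclidean $d$-space with distance $d(\cdot,\cdot)$; $\psi_{ij}(P)=d(P,Q_i)^2-d(P,Q_j)^2$. A real, additive gain graph $\Phi$ on vertex set $\{1,\dots,n\}$ is a finite graph (multiple edges allowed, every edge with two distinct endpoints) with gains $\phi(e;i,j)\in\mathbb{R}$ for each edge $e$ with endpoints $i,j$, satisfying $\phi(e;j,i)=-\phi(e;i,j)$. An edge set is balanced if every circle (simple closed path) in it has gain sum $0$ when read in a consistent direction. The Pythagorean arrangement $\mathcal{H}(\Phi;\mathbf{Q})$ consists of the hyperplanes $h(e)=\{P:\psi_{ij}(P)=\phi(e;i,j)\}$, one for each edge $e$ with endpoints $i,j$; a subset of hyperplanes corresponds to the set of edges indexing it. *)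

(* Defs.v *)
From HB Require Import structures.
From mathcomp Require Import all_boot all_order all_algebra.
From mathcomp Require Import reals.
Set Implicit Arguments. Unset Strict Implicit. Unset Printing Implicit Defensive.
Import Order.TTheory GRing.Theory Num.Theory.
Local Open Scope ring_scope.

Section PythArr.
Variables (R : realType) (n d : nat) (E : finType).
(* A gain graph on vertices 'I_n: every edge e has endpoints end1 e, end2 e
   (required distinct in the theorem), and gain phi(e; end1 e, end2 e) = phi e,
   so phi(e; end2 e, end1 e) = - phi e. *)
Variables (end1 end2 : E -> 'I_n) (phi : E -> R).

Definition joins (e : E) (u v : 'I_n) : bool :=
  ((end1 e == u) && (end2 e == v)) || ((end1 e == v) && (end2 e == u)).

Definition ogain (e : E) (u : 'I_n) : R := if end1 e == u then phi e else - phi e.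

(* A circle in F: a simple closed path with k+2 >= 2 distinct vertices
   vs 0, ..., vs (k+1) and distinct edges es i joining vs i and vs (i+1 mod k+2). *)
Definition is_circle_walk (F : {set E}) (k : nat)
    (vs : 'I_k.+2 -> 'I_n) (es : 'I_k.+2 -> E) : Prop :=
  injective vs /\ injective es /\ (forall i, es i \in F) /\
  (forall i, joins (es i) (vs i) (vs (ordS i))).

Definition has_circle (F : {set E}) : Prop :=
  exists k vs es, @is_circle_walk F k vs es.

Definition balanced (F : {set E}) : Prop :=
  forall k vs es, @is_circle_walk F k vs es ->
    \sum_(i < k.+2) ogain (es i) (vs i) = 0.

Definition forest (F : {set E}) : Prop := ~ has_circle F.

Definition sqdist (P Q : 'rV[R]_d) : R := \sum_(i < d) (P 0 i - Q 0 i) ^+ 2.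

Variable Q : 'I_n -> 'rV[R]_d.

Definition psi (i j : 'I_n) (P : 'rV[R]_d) : R := sqdist P (Q i) - sqdist P (Q j).

Definition hyp (e : E) (P : 'rV[R]_d) : Prop := psi (end1 e) (end2 e) P = phi e.

Definition inter (F : {set E}) (P : 'rV[R]_d) : Prop := forall e, e \in F -> hyp e P.

End PythArr.

Definition affine_dim (R : realType) (d : nat) (S : 'rV[R]_d -> Prop) (k : nat) : Prop :=
  exists (P0 : 'rV[R]_d) (V : {vspace 'rV[R]_d}),
    (forall P, S P <-> (P - P0) \in V) /\ \dim V = k.

(* Main.v *)
Require Import Defs.
From HB Require Import structures.
From mathcomp Require Import all_boot all_order all_algebra.
From mathcomp Require Import reals.
From mathcomp Require Import ring.
Set Implicit Arguments. Unset Strict Implicit. Unset Printing Implicit Defensive.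
Import Order.TTheory GRing.Theory Num.Theory.
Local Open Scope ring_scope.

From mathcomp Require Import zify.
Definition nrm (R : realType) (n d : nat) (E : finType) (end1 end2 : E -> 'I_n)
  (Q : 'I_n -> 'rV[R]_d) (e : E) : 'rV[R]_d := Q (end1 e) - Q (end2 e).

Lemma psi_diff (R : realType) (n d : nat) (Q : 'I_n -> 'rV[R]_d) a b P P0 :
  psi Q a b P - psi Q a b P0 = - 2 * ((Q a - Q b) *m (P - P0)^T) 0 0.
Proof.
rewrite /psi /sqdist mxE mulr_sumr -!sumrB; apply: eq_bigr => i _.
rewrite !mxE; ring.
Qed.

Lemma mx11_eq0 (R : realType) (M : 'M[R]_1) : M = 0 <-> M 0 0 = 0.
Proof.
split=> [->|h]; first by rewrite mxE.
by apply/matrixP=> i j; rewrite !ord1 h mxE.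
Qed.

Lemma hypE (R : realType) (n d : nat) (E : finType) (end1 end2 : E -> 'I_n)
  (phi : E -> R) (Q : 'I_n -> 'rV[R]_d) e P P0 :
  hyp end1 end2 phi Q e P0 ->
  (hyp end1 end2 phi Q e P <-> nrm end1 end2 Q e *m (P - P0)^T = 0).
Proof.
rewrite /hyp /nrm => h0; rewrite mx11_eq0; split=> h.
  have := psi_diff Q (end1 e) (end2 e) P P0; rewrite h h0 subrr => /esym/eqP.
  by rewrite mulf_eq0 oppr_eq0 pnatr_eq0 /= => /eqP.
by apply/eqP; rewrite -subr_eq0 -h0 psi_diff h mulr0.
Qed.

Lemma telescope (V : zmodType) (n k : nat) (vs : 'I_k.+2 -> 'I_n) (f : 'I_n -> V) :
  \sum_(j < k.+2) (f (vs j) - f (vs (ordS j))) = 0.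
Proof.
rewrite sumrB; apply/eqP; rewrite subr_eq0; apply/eqP.
exact: (reindex_inj (@ordS_inj _)).
Qed.

Lemma joins_if (V : zmodType) (n : nat) (E : finType) (end1 end2 : E -> 'I_n)
   (G : 'I_n -> V) e a b :
  joins end1 end2 e a b -> end1 e != end2 e ->
  (if end1 e == a then G (end1 e) - G (end2 e) else - (G (end1 e) - G (end2 e)))
   = G a - G b.
Proof.
rewrite /joins => /orP[/andP[/eqP-> /eqP->]|/andP[/eqP h1 /eqP h2]] ne.
  by rewrite eqxx.
have -> : (end1 e == a) = false.
  by apply/negbTE; apply: contraNN ne => /eqP ->; rewrite h2.
by rewrite h1 h2 opprB.
Qed.

Definition Bm (R : realType) (n d : nat) (E : finType) (end1 end2 : E -> 'I_n)
  (Q : 'I_n -> 'rV[R]_d) (F : {set E}) : 'M[R]_(#|F|, d) :=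
  \matrix_(i < #|F|) nrm end1 end2 Q (enum_val i).

Lemma rows0 (R : realType) m d (B : 'M[R]_(m, d)) (x : 'rV[R]_d) :
  x *m B^T = 0 <-> forall i, row i B *m x^T = 0.
Proof.
split=> [h i|h].
  by rewrite -row_mul -[B *m _]trmxK trmx_mul trmxK h trmx0 row0.
rewrite -[x *m _]trmxK trmx_mul trmxK; apply/trmx_inj; rewrite trmxK trmx0.
by apply/row_matrixP => i; rewrite row_mul h row0.
Qed.

Lemma interE (R : realType) (n d : nat) (E : finType) (end1 end2 : E -> 'I_n)
  (phi : E -> R) (Q : 'I_n -> 'rV[R]_d) (F : {set E}) P P0 :
  inter end1 end2 phi Q [set: E] P0 ->
  (inter end1 end2 phi Q F P <-> (P - P0) *m (Bm end1 end2 Q F)^T = 0).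
Proof.
move=> h0; rewrite rows0; split=> [h i|h e eF].
  rewrite rowK; apply/hypE; first by apply: h0; rewrite inE.
  by apply: h; apply: enum_valP.
apply/(hypE _ (h0 e (in_setT e))).
by have := h (enum_rank_in eF e); rewrite rowK enum_rankK_in.
Qed.

Lemma kersub (R : realType) d m1 m2 (A : 'M[R]_(d, m1)) (B : 'M[R]_(d, m2)) :
  (forall x : 'rV_d, x *m A = 0 -> x *m B = 0) -> (kermx A <= kermx B)%MS.
Proof.
move=> H; apply/sub_kermxP; apply/row_matrixP => i; rewrite row_mul row0.
by apply: H; rewrite -row_mul (sub_kermxP (submx_refl _)) row0.
Qed.

Theorem lemma5p4 (R : realType) (n d : nat) (E : finType)
    (end1 end2 : E -> 'I_n) (phi : E -> R) (Q : 'I_n -> 'rV[R]_d) :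
  (forall e : E, end1 e != end2 e) ->
  (forall e : E, Q (end1 e) != Q (end2 e)) ->
  (exists P, inter end1 end2 phi Q [set: E] P) ->
  balanced end1 end2 phi [set: E] /\
  exists k : nat,
    affine_dim (inter end1 end2 phi Q [set: E]) k /\
    (exists F : {set E}, #|F| = (d - k)%N /\
       (forall P, inter end1 end2 phi Q F P <-> inter end1 end2 phi Q [set: E] P)) /\
    (forall F : {set E}, #|F| = (d - k)%N ->
       (forall P, inter end1 end2 phi Q F P <-> inter end1 end2 phi Q [set: E] P) ->
       forest end1 end2 F).
Proof.
move=> ne _ [P0 h0]; split.
  move=> k vs es [_ [_ [_ hj]]].
  rewrite [RHS](esym (telescope vs (fun v => sqdist P0 (Q v)))).
  apply: eq_bigr => j _.
  rewrite -(joins_if (fun v => sqdist P0 (Q v)) (hj j) (ne _)) /ogain.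
  have := h0 (es j) (in_setT _); rewrite /hyp /psi => ->.
  by case: ifP.
set B := Bm end1 end2 Q [set: E].
set K := kermx B^T.
have rBd : (\rank B <= d)%N by apply: rank_leq_col.
have dk : (d - \rank K)%N = \rank B.
  by rewrite /K mxrank_ker mxrank_tr; lia.
exists (\rank K); split; last split.
- exists P0, (limg (linfun (mulmxr (row_base K)))); split.
    move=> P; rewrite (interE _ _ h0) /B; split.
      move/sub_kermxP; rewrite -/K => hk.
      have /submxP[u ->] : (P - P0 <= row_base K)%MS by rewrite eq_row_base.
      by apply/memv_imgP; exists u; rewrite ?memvf // lfunE.
    case/memv_imgP => u _; rewrite lfunE /= => ->.
    apply/sub_kermxP; rewrite -/K; have := submxMl u (row_base K).
    by rewrite eq_row_base.
  rewrite limg_dim_eq; first by rewrite dimvf dim_matrix; lia.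
  apply/eqP; rewrite capfv; apply/lker0P => x y.
  rewrite !lfunE /=; exact: (row_free_inj (row_base_free K)).
- pose f := maxrankfun B.
  exists [set enum_val (f i) | i : 'I_(\rank B)]; split.
    rewrite dk card_imset ?card_ord // => i j /enum_val_inj.
    exact: maxrankfun_inj.
  move=> P; split; last by move=> h e _; apply: h; rewrite inE.
  move=> h; apply/(interE _ _ h0).
  have : (B <= rowsub f B)%MS by rewrite eq_maxrowsub.
  case/submxP => D hD; rewrite -/B hD trmx_mul mulmxA.
  suff -> : (P - P0) *m (rowsub f B)^T = 0 by rewrite mul0mx.
  apply/rows0 => i; rewrite row_rowsub rowK.
  apply/hypE; first by apply: h0; rewrite inE.
  by apply: h; apply/imsetP; exists i.
- move=> F cF eqF.
  set BF := Bm end1 end2 Q F.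
  have sK : (kermx BF^T <= K)%MS.
    apply: kersub => x hx.
    have : inter end1 end2 phi Q F (P0 + x).
      by apply/(interE _ _ h0); rewrite addrC addKr.
    by move/eqF/(interE _ _ h0); rewrite addrC addKr.
  have rF : row_free BF.
    have := mxrankS sK; rewrite /K !mxrank_ker !mxrank_tr.
    have := rank_leq_row BF; have := rank_leq_col BF.
    rewrite /row_free; move=> h1 h2 h3; apply/eqP.
    have := cF; rewrite dk => cF'; lia.
  move=> [kk [vs [es [vinj [einj [esF hj]]]]]].
  pose sg j : R := if end1 (es j) == vs j then 1 else -1.
  pose u := \row_(i < #|F|) \sum_(j < kk.+2) (if es j == enum_val i then sg j else 0).
  have u0 : u *m BF = 0.
    rewrite mulmx_sum_row.
    under eq_bigr => i _ do rewrite rowK mxE scaler_suml.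
    rewrite exchange_big /= [RHS](esym (telescope vs Q)); apply: eq_bigr => j _.
    rewrite (bigD1 (enum_rank_in (esF j) (es j))) //= enum_rankK_in // eqxx.
    rewrite big1 ?addr0; last first.
      move=> i ni; case: eqP => [ei|]; last by rewrite scale0r.
      by case/eqP: ni; apply: enum_val_inj; rewrite enum_rankK_in // ei.
    rewrite -(joins_if Q (hj j) (ne _)) /sg /nrm.
    by case: ifP; rewrite ?scale1r ?scaleN1r.
  have : u = 0 by apply: (row_free_inj rF); rewrite u0 mul0mx.
  move/matrixP/(_ 0 (enum_rank_in (esF ord0) (es ord0))); rewrite !mxE.
  rewrite (bigD1 ord0) //= enum_rankK_in // eqxx big1 ?addr0; last first.
    move=> j nj; case: eqP => // /einj ej.
    by rewrite ej eqxx in nj.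
  by rewrite /sg; case: ifP => _ /eqP; rewrite ?oner_eq0 ?oppr_eq0 ?oner_eq0.
Qed.
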